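(* Let $K$ be a field, $Q=(V,E,X,s,t,l)$ a labelled quiver and $\mathcal{R}=(\mathcal{V},\varphi)$ a representation of $Q$ over $K$ that is consistent with the labelling $l$. Let $u,v,w\in V$. Then for all $f\in K\langle X\rangle_{v,w}$ and $g\in K\langle X\rangle_{u,v}$ we have $fg\in K\langle X\rangle_{u,w}$ and $\varphi_{u,w}(fg)=\varphi_{v,w}(f)\cdot\varphi_{u,v}(g)$.
   Context: $K\langle X\rangle$ is the free algebra of noncommutative polynomials over $K$ in indeterminates $X$, with monomials the words in $\langle X\rangle$ (including the empty word $1$); $\operatorname{supp}(f)$ is the set of monomials with nonzero coefficient. A labelled quiver $Q=(V,E,X,s,t,l)$ has vertices $V$, edges $E$, source/target maps $s,t:E\to V$ and labelling $l:E\to X$. A nonempty path $p=e_n\cdots e_1$ (with $s(e_{i+1})=t(e_i)$) has label $l(e_n)\cdots l(e_1)$, source $s(e_1)$, target $t(e_n)$; each vertex $v$ has an empty path with label $1$ and source and target $v$. For a monomial $m$, $\sigma(m)=\{(s(p),t(p)) : p \text{ a path with } l(p)=m\}$; for a polynomial $f$, $\sigma(f)=\bigcap_{m\in\operatorname{supp}(f)}\sigma(m)$. $K\langle X\rangle_{v,w}=\{f : (v,w)\in\sigma(f)\}$. A representation $(\mathcal{V},\varphi)$ of $Q$ over $K$ assigns to each vertex $v$ a $K$-vector space $\mathcal{V}_v$ and to each edge $e$ a $K$-linear map $\varphi(e):\mathcal{V}_{s(e)}\to\mathcal{V}_{t(e)}$; it is consistent with $l$ if for any two nonempty paths $e_n\cdots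 e_1$ and $d_n\cdots d_1$ with the same source and target and equal labels, $\varphi(e_n)\cdots\varphi(e_1)=\varphi(d_n)\cdots\varphi(d_1)$. For $v,w\in V$, $\varphi_{v,w}:K\langle X\rangle_{v,w}\to L(\mathcal{V}_v,\mathcal{V}_w)$ is the (well-defined) $K$-linear map with $\varphi_{v,w}(l(e_n\cdots e_1))=\varphi(e_n)\cdots\varphi(e_1)$ for nonempty paths $e_n\cdots e_1$ from $v$ to $w$, and $\varphi_{v,v}(1)=\mathrm{id}_{\mathcal{V}_v}$. *)

(* Defs.v *)
From HB Require Import structures.
From mathcomp Require Import all_boot all_order all_algebra.
From mathcomp Require Import finmap.
From Stdlib Require Import ClassicalEpsilon.
Set Implicit Arguments. Unset Strict Implicit. Unset Printing Implicit Defensive.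
Import GRing.Theory.
Local Open Scope ring_scope.
Local Open Scope fset_scope.

(* Monomials = words over X, represented as seq X (written left to right);
   the empty word [::] is the monomial 1.  A noncommutative polynomial is a
   finitely supported function from words to K. *)
Definition ncpoly (K : fieldType) (X : choiceType) := {fsfun seq X -> K with 0}.

Definition ncsupp (K : fieldType) (X : choiceType) (f : ncpoly K X) : {fset seq X} :=
  finsupp f.

(* coefficient of the word m in f*g : sum over factorisations m = a ++ b *)
Definition ncmul_coef (K : fieldType) (X : choiceType) (f g : ncpoly K X)
  (m : seq X) : K :=
  \sum_(i < (size m).+1) f (take i m) * g (drop i m).

(* product in K<X> (concatenation of words, extended bilinearly) *)
Definition ncmul (K : fieldType) (X : choiceType) (f g : ncpoly K X) : ncpoly K X :=
  [fsfun m in [fset a ++ b | a in finsupp f, b in finsupp g] => ncmul_coef f g m | 0].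

Record lquiver (X : Type) := LQuiver {
  qV : eqType;
  qE : Type;
  qs : qE -> qV;
  qt : qE -> qV;
  ql : qE -> X
}.

(* A path e_n ... e_1 is represented by the list [:: e_n; ...; e_1]
   (written order).  [qwalk v w p] says that p is a path with source v and
   target w: for the empty list this means v = w (the empty path at v);
   for e :: p' it means t(e) = w and p' is a path from v to s(e). *)
Fixpoint qwalk X (Q : lquiver X) (v w : qV Q) (p : seq (qE Q)) : Prop :=
  match p with
  | [::] => v = w
  | e :: p' => qt e = w /\ qwalk v (qs e) p'
  end.

Definition qlabel X (Q : lquiver X) (p : seq (qE Q)) : seq X := map (@ql X Q) p.

Definition in_sigma_mono X (Q : lquiver X) (m : seq X) (v w : qV Q) : Prop :=
  exists p, qwalk v w p /\ qlabel p = m.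

(* f \in K<X>_{v,w}, i.e. (v,w) \in sigma(f) = \bigcap_{m in supp f} sigma(m) *)
Definition in_KXvw (K : fieldType) (X : choiceType) (Q : lquiver X)
  (v w : qV Q) (f : ncpoly K X) : Prop :=
  forall m, m \in ncsupp f -> in_sigma_mono m v w.

Section Rep.
Variables (K : fieldType) (X : choiceType) (Q : lquiver X).
Variable VS : qV Q -> lmodType K.
Variable phi : forall e : qE Q, {linear VS (qs e) -> VS (qt e)}.

Definition vtransport (a b : qV Q) (H : a = b) : VS a -> VS b :=
  match H in _ = b' return VS a -> VS b' with erefl => id end.

(* the map phi(e_n) ... phi(e_1) : V_v -> V_w of a path from v to w
   (identity for the empty path at v; the zero map if p is not a path
   from v to w) *)
Unset Implicit Arguments.
Fixpoint path_map (p : seq (qE Q)) (v w : qV Q) : VS v -> VS w :=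
  match p with
  | [::] => fun x => match @eqP _ v w with
                     | ReflectT H => vtransport H x
                     | ReflectF _ => 0
                     end
  | e :: p' => fun x => match @eqP _ (qt e) w with
                     | ReflectT H => vtransport H (phi e (path_map p' v (qs e) x))
                     | ReflectF _ => 0
                     end
  end.
Set Implicit Arguments.

Definition consistent : Prop :=
  forall (v w : qV Q) (p q : seq (qE Q)),
    p <> [::] -> q <> [::] ->
    qwalk v w p -> qwalk v w q -> qlabel p = qlabel q ->
    path_map p v w = path_map q v w.

(* the map associated to a monomial m in sigma^{-1}(v,w): the composite along
   some path from v to w labelled m (well defined by consistency) *)
Definition mono_map (v w : qV Q) (m : seq X) : VS v -> VS w :=
  path_map (epsilon (inhabits [::]) (fun p => qwalk v w p /\ qlabel p = m)) v w.

Definition phi_vw (v w : qV Q) (f : ncpoly K X) : VS v -> VS w :=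
  fun x => \sum_(m <- ncsupp f) f m *: @mono_map v w m x.

End Rep.

Arguments in_KXvw {K X Q} v w f.
Arguments phi_vw {K X Q VS} phi v w f _.
Arguments mono_map {K X Q VS} phi v w m _.
Arguments consistent {K X Q VS} phi.

(* Main.v *)
Require Import Defs.
From HB Require Import structures.
From mathcomp Require Import all_boot all_order all_algebra.
From mathcomp Require Import finmap.
From Stdlib Require Import ClassicalEpsilon FunctionalExtensionality.
Set Implicit Arguments. Unset Strict Implicit. Unset Printing Implicit Defensive.
Import GRing.Theory.
Local Open Scope ring_scope.

Section PM.
Variables (K : fieldType) (X : choiceType) (Q : lquiver X).
Variable VS : qV Q -> lmodType K.
Variable phi : forall e : qE Q, {linear VS (qs e) -> VS (qt e)}.
Local Notation PM := (@Defs.path_map K X Q VS phi).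

Lemma pm_nil (v : qV Q) (y : VS v) : PM [::] v v y = y.
Proof. rewrite /=; case: eqP => // H; by rewrite (eq_irrelevance H erefl). Qed.

Lemma pm_cat (u v : qV Q) (q : seq (qE Q)) (x : VS u) p :
  forall w, qwalk v w p ->
  PM (p ++ q) u w x = PM p v w (PM q u v x).
Proof.
elim: p => [|e p IH] w /=.
  by move=> Hvw; subst w; case: eqP => // H; rewrite (eq_irrelevance H erefl).
by move=> [Ht Hp]; rewrite IH.
Qed.

Lemma qwalk_cat (u v w : qV Q) p q : qwalk v w p -> qwalk u v q -> qwalk u w (p ++ q).
Proof.
elim: p w => [|e p IH] w /=; first by move=> ->.
by move=> [Ht Hp] Hq; split => //; apply: IH.
Qed.

Lemma pm0 p (v w : qV Q) : PM p v w 0 = 0.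
Proof.
elim: p w => [|e p IH] w /=.
  by case: eqP => // H; subst w.
by case: eqP => // H; subst w; rewrite /= IH linear0.
Qed.

Lemma pmP p (v w : qV Q) (a : K) x y :
  PM p v w (a *: x + y) = a *: PM p v w x + PM p v w y.
Proof.
elim: p w => [|e p IH] w /=.
  by case: eqP => H; [subst w | rewrite scaler0 addr0].
by case: eqP => H; [subst w; rewrite /= IH linearP | rewrite scaler0 addr0].
Qed.

Lemma pm_sum p (v w : qV Q) (I : Type) (r : seq I) (c : I -> K) (y : I -> VS v) :
  PM p v w (\sum_(i <- r) c i *: y i) = \sum_(i <- r) c i *: PM p v w (y i).
Proof.
elim: r => [|h r IH]; first by rewrite !big_nil pm0.
by rewrite !big_cons pmP IH.
Qed.


Lemma qlabel_cat (p q : seq (qE Q)) : qlabel (p ++ q) = qlabel p ++ qlabel q.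
Proof. exact: map_cat. Qed.

Hypothesis Hcons : consistent phi.

Lemma same_label (u w : qV Q) p1 p2 :
  qwalk u w p1 -> qwalk u w p2 -> qlabel p1 = qlabel p2 -> PM p1 u w = PM p2 u w.
Proof.
move=> W1 W2 L.
case: p1 W1 L => [|e1 p1] W1 L.
  by case: p2 W2 L.
case: p2 W2 L => [|e2 p2] W2 L; first by [].
by apply: Hcons.
Qed.

Lemma mono_spec (v w : qV Q) m : in_sigma_mono m v w ->
  qwalk v w (epsilon (inhabits [::]) (fun p => qwalk v w p /\ qlabel p = m)) /\
  qlabel (epsilon (inhabits [::]) (fun p => qwalk v w p /\ qlabel p = m)) = m.
Proof. by move=> H; apply: (epsilon_spec (inhabits [::]) _ H). Qed.

Lemma mono_comp (u v w : qV Q) a b (x : VS u) :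
  in_sigma_mono a v w -> in_sigma_mono b u v ->
  mono_map phi u w (a ++ b) x = mono_map phi v w a (mono_map phi u v b x).
Proof.
move=> /mono_spec [Wa La] /mono_spec [Wb Lb].
have Hab : in_sigma_mono (a ++ b) u w.
  exists (epsilon (inhabits [::]) (fun p => qwalk v w p /\ qlabel p = a) ++
          epsilon (inhabits [::]) (fun p => qwalk u v p /\ qlabel p = b)).
  by split; [exact: qwalk_cat Wa Wb | rewrite qlabel_cat La Lb].
have [Wab Lab] := mono_spec Hab.
rewrite /mono_map -(@pm_cat u v _ x _ w Wa); congr (_ x); apply: same_label => //.
  exact: qwalk_cat Wa Wb.
by rewrite Lab qlabel_cat La Lb.
Qed.

End PM.

Lemma big_sub_uniq (T : eqType) (V : zmodType) (s1 s2 : seq T) (F : T -> V) :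
  uniq s1 -> uniq s2 -> {subset s1 <= s2} ->
  (forall x, x \in s2 -> x \notin s1 -> F x = 0) ->
  \sum_(x <- s2) F x = \sum_(x <- s1) F x.
Proof.
move=> u1 u2 sub H.
rewrite [RHS](perm_big [seq x <- s2 | x \in s1]); last first.
  apply: uniq_perm => //; first exact: filter_uniq.
  by move=> x; rewrite mem_filter; case: (boolP (x \in s1)) => // /sub ->.
rewrite big_filter [RHS]big_mkcond /= [LHS]big_seq [RHS]big_seq; apply: eq_bigr => x xs.
by case: ifP => // /negbT; apply: H.
Qed.

Lemma comb (K : fieldType) (X : eqType) (V : lmodType K) (f g : seq X -> K)
  (A B S : seq (seq X)) (F : seq X -> V) :
  uniq A -> uniq B -> uniq S ->
  (forall a, a \notin A -> f a = 0) -> (forall b, b \notin B -> g b = 0) ->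
  (forall a b, a \in A -> b \in B -> a ++ b \in S) ->
  \sum_(m <- S) (\sum_(i < (size m).+1) f (take i m) * g (drop i m)) *: F m =
  \sum_(a <- A) \sum_(b <- B) (f a * g b) *: F (a ++ b).
Proof.
move=> uA uB uS fA gB AB.
pose h := fun p : seq X * seq X => (f p.1 * g p.2) *: F (p.1 ++ p.2).
transitivity (\sum_(m <- S) \sum_(i <- iota 0 (size m).+1) h (take i m, drop i m)).
  apply: eq_bigr => m _.
  rewrite scaler_suml -(big_mkord xpredT (fun i => (f (take i m) * g (drop i m)) *: F m)).
  rewrite /index_iota subn0; apply: eq_bigr => i _.
  by rewrite /h /= cat_take_drop.
rewrite -(big_allpairs_dep (h := fun m i => (take i m, drop i m)) (r1 := S) (r2 := fun m => iota 0 (size m).+1) (F := h)).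
transitivity (\sum_(p <- [seq (a, b) | a <- A, b <- B]) h p); last first.
  by rewrite big_allpairs.
apply: big_sub_uniq.
- apply: allpairs_uniq => //; by move=> [a b] [a' b'] _ _ /= [-> ->].
- apply: (allpairs_uniq_dep (T := fun _ => nat)) => //.
    by move=> m _; apply: iota_uniq.
  move=> [m1 i1] [m2 i2] /flatten_mapP [x1 _ /mapP [y1 H1 [E1 E1q]]]
     /flatten_mapP [x2 _ /mapP [y2 H2 [E2 E2q]]] /= [Et Ed].
  subst x1 x2 y1 y2 => /=.
  have Em : m1 = m2 by rewrite -(cat_take_drop i1 m1) -(cat_take_drop i2 m2) Et Ed.
  subst m2.
  move: H1 H2; rewrite !mem_iota /= !ltnS => H1 H2.
  have : size (take i1 m1) = size (take i2 m1) by rewrite Et.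
  by rewrite !size_take_min (minn_idPl H1) (minn_idPl H2) => ->.
- move=> p /allpairsP [[a b] [Ha Hb ->]].
  apply/flatten_mapP; exists (a ++ b); first exact: AB.
  have -> : (a, b) = (fun i => (take i (a ++ b), drop i (a ++ b))) (size a).
    by rewrite /= take_size_cat // drop_size_cat.
  by apply: map_f; rewrite mem_iota size_cat /= ltnS leq_addr.
- move=> [a b] _ Hn; rewrite /h /=.
  case: (boolP (a \in A)) => Ha; last by rewrite fA ?mul0r ?scale0r.
  case: (boolP (b \in B)) => Hb; last by rewrite gB ?mulr0 ?scale0r.
  by case/negP: Hn; apply/allpairsP; exists (a, b).
Qed.

Theorem lemma5p6 (K : fieldType) (X : choiceType) (Q : lquiver X)
  (VS : qV Q -> lmodType K)
  (phi : forall e : qE Q, {linear VS (qs e) -> VS (qt e)})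
  (Hcons : consistent phi)
  (u v w : qV Q) (f g : ncpoly K X) :
  in_KXvw v w f -> in_KXvw u v g ->
  in_KXvw u w (ncmul f g) /\
  phi_vw phi u w (ncmul f g) = (phi_vw phi v w f \o phi_vw phi u v g)%FUN.
Proof.
move=> Hf Hg.
have Hsub : (finsupp (ncmul f g) `<=` [fset a ++ b | a in finsupp f, b in finsupp g])%fset.
  exact: finsupp_sub.
split.
  move=> m /(fsubsetP Hsub) /imfset2P [a Ha [b Hb ->]].
  have [pa [Wa La]] := Hf a Ha.
  have [pb [Wb Lb]] := Hg b Hb.
  exists (pa ++ pb); split; first exact: qwalk_cat Wa Wb.
  by rewrite qlabel_cat La Lb.
apply: functional_extensionality => x /=.
rewrite /phi_vw /ncsupp.
set S := [fset a ++ b | a in finsupp f, b in finsupp g]%fset.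
rewrite -(@big_sub_uniq _ _ (finsupp (ncmul f g)) S); first last.
- by move=> m _; rewrite memNfinsupp => /eqP ->; rewrite scale0r.
- by move=> m /(fsubsetP Hsub).
- exact: fset_uniq.
- exact: fset_uniq.
transitivity (\sum_(m <- S) (ncmul_coef f g m) *: mono_map phi u w m x).
  rewrite [LHS]big_seq [RHS]big_seq; apply: eq_bigr => m mS.
  by rewrite /ncmul fsfunE mS.
rewrite /ncmul_coef (comb (A := finsupp f) (B := finsupp g)); first last.
- by move=> a b Ha Hb; rewrite in_imfset2.
- by move=> b; rewrite memNfinsupp => /eqP.
- by move=> a; rewrite memNfinsupp => /eqP.
- exact: fset_uniq.
- exact: fset_uniq.
- exact: fset_uniq.
rewrite [LHS]big_seq [RHS]big_seq; apply: eq_bigr => a Ha.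
rewrite /mono_map pm_sum -/(mono_map phi v w a) scaler_sumr.
rewrite [LHS]big_seq [RHS]big_seq; apply: eq_bigr => b Hb.
rewrite scalerA; congr (_ *: _).
have E := mono_comp Hcons x (Hf a Ha) (Hg b Hb).
by move: E; rewrite /mono_map.
Qed.
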